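(* Fix $y$ with $\phi_0(y)\neq0$. Define $\gamma_0(y)=1/\phi_0(y)$ and, recursively for $n\ge1$, $$\gamma_n(y)=-\frac{1}{\phi_0(y)}\sum_{j=1}^{n}\binom{n}{j}\phi_j(y)\,\gamma_{n-j}(y).$$ Then, for every $x$, $${}_G\lambda_0^{R}(x,y)=\frac{1}{\gamma_0(y)}\,\Gamma(R+I)\,\Gamma(2R+I)^{-1}.$$ Moreover, for every $n\ge1$, $${}_G\lambda_n^{R}(x,y)=\frac{(-1)^n}{\gamma_0(y)^{n+1}}\det M_n,$$ where $M_n$ is the $(n+1)\times(n+1)$ array with rows indexed $i=0,\dots,n$ and columns indexed $k=0,\dots,n$, as follows: - Row $0$ is $\big(\lambda_0^R(x),\lambda_1^R(x),\dots,\lambda_n^R(x)\big)$, where $\lambda_0^R(x)=\Gamma(R+I)\Gamma(2R+I)^{-1}$. - For $1\le i\le n$, the entries of row $i$ are $$(M_n)_{i,k}=\binom{k}{i-1}\gamma_{k-i+1}(y)\ \text{ if } k\ge i-1,\qquad (M_n)_{i,k}=0\ \text{ otherwise}.$$ For example, row $1$ is $(\gamma_0,\gamma_1,\dots,\gamma_n)$, row $2$ is $(0,\gamma_0,2\gamma_1,\dots,\binom{n}{1}\gamma_{n-1})$, and the last row is $(0,\dots,0,\gamma_0,\binom{n}{1}\gamma_1)$. Only row $0$ has matrix entries, so $\det M_n$ is understood as the Laplace expansion along row $0$: $$\det M_n=\sum_{k=0}^n(-1)^k\lambda_k^R(x)\,\det M_n^{(0,k)},$$ where $M_n^{(0,k)}$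 is the scalar minor obtained by deleting row $0$ and column $k$.
   Context: Let $N\ge 1$ and let $R\in\mathbb{C}^{N\times N}$ be positive stable, i.e. every eigenvalue of $R$ has positive real part. $I$ denotes the $N\times N$ identity matrix, and $\Gamma$ of a matrix is defined by the holomorphic functional calculus. For such $R$ and every integer $j\ge0$ the matrix $\Gamma(2R+(2j+1)I)$ is invertible. Put $$c_j(R)=\Gamma(R+(j+1)I)\,\Gamma(2R+(2j+1)I)^{-1}\qquad (j\ge 0).$$ The one-variable $\lambda$-matrix polynomials are $$\lambda_n^R(x)=\sum_{j=0}^n\binom{n}{j}(-1)^j c_j(R)\,x^{n-j}.$$ Let $(\phi_n(y))_{n\ge0}$ be a sequence of complex-valued functions of a variable $y$. The 2-variable general-$\lambda$-matrix polynomials are defined by $${}_G\lambda_n^R(x,y)=\sum_{\substack{a,b,c\ge0\\ a+b+c=n}}\frac{n!}{a!\,b!\,c!}\,x^a\,\phi_b(y)\,(-1)^c\,c_c(R).$$ *)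

(* Defs.v *)
From HB Require Import structures.
From mathcomp Require Import all_boot all_order all_algebra.
From mathcomp Require Import complex.
From mathcomp Require Import reals.
Set Implicit Arguments. Unset Strict Implicit. Unset Printing Implicit Defensive.
Import Order.TTheory GRing.Theory Num.Theory.
Local Open Scope ring_scope.

Section Defs.
Variables (K : realType) (N : nat).
Local Notation C := (complex K).

Definition positive_stable (R : 'M[C]_N) : Prop :=
  forall a : C, eigenvalue R a -> 0 < complex.Re a.

(* c_j(R) = Gam(R + (j+1) I) * Gam(2R + (2j+1) I)^{-1}, where Gam is the
   (holomorphic functional calculus) matrix Gamma function, passed as a
   parameter. *)
Definition cj (Gam : 'M[C]_N -> 'M[C]_N) (R : 'M[C]_N) (j : nat) : 'M[C]_N :=
  Gam (R + (j.+1)%:R%:M) *m invmx (Gam (R *+ 2 + (j.*2.+1)%:R%:M)).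

Definition lambdaR (Gam : 'M[C]_N -> 'M[C]_N) (R : 'M[C]_N) (n : nat) (x : C)
  : 'M[C]_N :=
  \sum_(j < n.+1) (('C(n, j))%:R * (-1) ^+ j * x ^+ (n - j)) *: cj Gam R j.

Definition Glambda (Gam : 'M[C]_N -> 'M[C]_N) (R : 'M[C]_N)
  (Y : Type) (phi : nat -> Y -> C) (n : nat) (x : C) (y : Y) : 'M[C]_N :=
  \sum_(a < n.+1) \sum_(b < n.+1 | (a + b <= n)%N)
    ((n`!)%:R / ((a`!)%:R * (b`!)%:R * ((n - a - b)`!)%:R)
       * x ^+ a * phi b y * (-1) ^+ (n - a - b)) *: cj Gam R (n - a - b).

(* Rows 1..n of M_n, reindexed i' = i-1 (i' = 0..n-1), columns k = 0..n:
   entry C(k, i') gamma_{k-i'} if k >= i', else 0. *)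
Definition Mrows (gam : nat -> C) (n : nat) : 'M[C]_(n, n.+1) :=
  \matrix_(i < n, k < n.+1)
    (if (i <= k)%N then ('C(k, i))%:R * gam (k - i)%N else 0).

Definition detMn (Gam : 'M[C]_N -> 'M[C]_N) (R : 'M[C]_N) (gam : nat -> C)
  (n : nat) (x : C) : 'M[C]_N :=
  \sum_(k < n.+1) ((-1) ^+ k * \det (col' k (Mrows gam n))) *: lambdaR Gam R k x.

End Defs.

(* Main.v *)
Require Import Defs.
From HB Require Import structures.
From mathcomp Require Import all_boot all_order all_algebra.
From mathcomp Require Import complex.
From mathcomp Require Import reals.
From mathcomp Require Import zify ring.
Import Order.TTheory GRing.Theory Num.Theory.
Local Open Scope ring_scope.

Lemma binCC (k a b : nat) : (b + a <= k)%N ->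
  ('C(k, b + a) * 'C(b + a, a) = 'C(k, b) * 'C(k - b, a))%N.
Proof.
move=> h.
have e1 := bin_fact (leq_addl b a); rewrite addnK in e1.
have e2 := bin_fact h.
have e3 : (a <= k - b)%N by lia.
have e3' := bin_fact e3.
have e4 : (b <= k)%N by lia.
have e4' := bin_fact e4.
have P0 : (0 < a`! * b`! * (k - b - a)`!)%N by rewrite !muln_gt0 !fact_gt0.
apply/eqP; rewrite -(eqn_pmul2r P0); apply/eqP.
transitivity (k`!).
  rewrite -e2 -e1 subnDA. lia.
rewrite -e4' -e3'. lia.
Qed.

Lemma sum_widen0 (V : nmodType) (n1 n2 : nat) (F : nat -> V) :
  (n1 <= n2)%N -> (forall i, (n1 <= i)%N -> F i = 0) ->
  \sum_(i < n1) F i = \sum_(i < n2) F i.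
Proof.
move=> h h0; rewrite (big_ord_widen _ _ h) big_mkcond /=.
apply: eq_bigr => i _; case: ifP => // /negbT; rewrite -leqNgt => /h0 //.
Qed.

Lemma conv_assoc (F : comNzRingType) (V : lmodType F) (f g : nat -> F)
  (L : nat -> V) (k : nat) :
  \sum_(m < k.+1) ('C(k, m)%:R * f (k - m)%N) *:
     \sum_(b < m.+1) ('C(m, b)%:R * g b) *: L (m - b)%N
  = \sum_(j < k.+1) ('C(k, j)%:R * \sum_(i < (k - j).+1) 'C(k - j, i)%:R * g i * f (k - j - i)%N) *: L j.
Proof.
transitivity (\sum_(m < k.+1) \sum_(b < k.+1)
   (('C(k, m) * 'C(m, b))%:R * f (k - m)%N * g b) *: L (m - b)%N).
  apply: eq_bigr => m _; rewrite scaler_sumr.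
  rewrite (@sum_widen0 _ m.+1 k.+1 (fun b => ('C(k, m)%:R * f (k - m)%N) *: (('C(m, b)%:R * g b) *: L (m - b)%N))) ?ltn_ord //.
    apply: eq_bigr => b _; rewrite scalerA natrM; congr (_ *: _); ring.
  by move=> i hi; rewrite (bin_small hi) mul0r scale0r scaler0.
transitivity (\sum_(j < k.+1) \sum_(i < k.+1)
   (('C(k, j) * 'C(k - j, i))%:R * g i * f (k - j - i)%N) *: L j); last first.
  apply: eq_bigr => j _; rewrite mulr_sumr scaler_suml.
  rewrite (@sum_widen0 _ (k - j).+1 k.+1 (fun i => ('C(k, j)%:R * ('C(k - j, i)%:R * g i * f (k - j - i)%N)) *: L j)) ?ltnS ?leq_subr //.
    apply: eq_bigr => b _; rewrite natrM; congr (_ *: _); ring.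
  by move=> i hi; rewrite (bin_small hi) !(mul0r, mulr0) scale0r.
rewrite exchange_big [RHS]exchange_big /=; apply: eq_bigr => i _.
transitivity (\sum_(0 <= m < k.+1) (('C(k, m) * 'C(m, i))%:R * f (k - m)%N * g i) *: L (m - i)%N).
  by rewrite big_mkord.
transitivity (\sum_(0 <= j < k.+1) (('C(k, j) * 'C(k - j, i))%:R * g i * f (k - j - i)%N) *: L j); last first.
  by rewrite big_mkord.
have hi : (i <= k.+1)%N by apply: ltnW.
rewrite (big_cat_nat (leq0n i) hi) /=.
rewrite big_nat_cond big1 ?add0r; last first.
  by move=> m /andP[/andP[_ hm] _]; rewrite (bin_small hm) muln0 !mul0r scale0r.
rewrite -{1}[nat_of_ord i]add0n big_addn.
have hi2 : (k.+1 - i <= k.+1)%N by apply: leq_subr.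
rewrite (big_cat_nat (leq0n _) hi2) /=.
rewrite [X in _ = _ + X]big_nat_cond [X in _ = _ + X]big1 ?addr0; last first.
  move=> j /andP[/andP[hj1 hj2] _]; rewrite (bin_small (n := (k - j)%N)) ?muln0 ?mul0r ?scale0r //.
  lia.
rewrite big_nat_cond [RHS]big_nat_cond; apply: eq_bigr => j /andP[/andP[_ hj] _].
have hb : (j + i <= k)%N by lia.
rewrite binCC // addnK subnDA; congr (_ *: _); ring.
Qed.

Lemma Glambda_conv (K : realType) (N : nat) (Gam : 'M[complex K]_N -> 'M[complex K]_N)
  (R : 'M[complex K]_N) (Y : Type) (phi : nat -> Y -> complex K) (n : nat) x y :
  Glambda Gam R phi n x y =
  \sum_(b < n.+1) ('C(n, b)%:R * phi b y) *: lambdaR Gam R (n - b) x.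
Proof.
rewrite /Glambda.
under eq_bigr do rewrite big_mkcond /=.
rewrite exchange_big /=; apply: eq_bigr => b _.
have hb : (b <= n)%N by rewrite -ltnS.
rewrite /lambdaR scaler_sumr.
set T := fun a : nat => (if (a + b <= n)%N then
   ((n`!)%:R / ((a`!)%:R * (b`!)%:R * ((n - a - b)`!)%:R)
       * x ^+ a * phi b y * (-1) ^+ (n - a - b)) *: cj Gam R (n - a - b)
   else 0 : 'M[complex K]_N).
rewrite -(@sum_widen0 _ (n - b).+1 n.+1 T); last 2 first.
- by rewrite ltnS leq_subr.
- by move=> i hi; rewrite /T; case: ifP => //; lia.
rewrite (reindex_inj rev_ord_inj) /=; apply: eq_bigr => j _.
rewrite /T subSS.
have hj : (j <= n - b)%N by rewrite -ltnS.
have -> : (n - b - j + b <= n)%N by lia.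
have -> : (n - (n - b - j) - b = j)%N by lia.
rewrite scalerA; congr (_ *: _).
have e1 := bin_fact hb.
have e2 := bin_fact hj.
have e : ((n`!) = 'C(n, b) * 'C(n - b, j) * ((n - b - j)`! * b`! * j`!))%N.
  rewrite -e1 -e2; lia.
rewrite e !natrM.
have f1 : ((n - b - j)`!)%:R != 0 :> complex K by rewrite pnatr_eq0 -lt0n fact_gt0.
have f2 : (b`!)%:R != 0 :> complex K by rewrite pnatr_eq0 -lt0n fact_gt0.
have f3 : (j`!)%:R != 0 :> complex K by rewrite pnatr_eq0 -lt0n fact_gt0.
field.
by rewrite f1 f2 f3.
Qed.

Lemma rec_zero (F : fieldType) (p g : nat -> F) (hp : p 0%N != 0)
  (hgamS : forall n : nat, (1 <= n)%N ->
     g n = - (p 0%N)^-1 * \sum_(1 <= j < n.+1) ('C(n, j))%:R * p j * g (n - j)%N)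
  (s : nat) : (1 <= s)%N ->
  \sum_(i < s.+1) 'C(s, i)%:R * p i * g (s - i)%N = 0.
Proof.
move=> hs; rewrite big_ord_recl /= bin0 subn0 mul1r (hgamS s hs).
rewrite big_add1 /= big_mkord.
set S := (X in _ * (_ * X) + _); set S' := (X in _ + X).
have -> : S' = S by apply: eq_bigr => i _; rewrite /bump /=.
by rewrite mulrA mulrN mulfV // mulN1r addNr.
Qed.

Lemma lambda_inv (K : realType) (N : nat) (Gam : 'M[complex K]_N -> 'M[complex K]_N)
  (R : 'M[complex K]_N) (Y : Type) (phi : nat -> Y -> complex K) (y : Y)
  (gam : nat -> complex K) (hp : phi 0%N y != 0)
  (hgam0 : gam 0%N = (phi 0%N y)^-1)
  (hgamS : forall n : nat, (1 <= n)%N ->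
     gam n = - (phi 0%N y)^-1 *
       \sum_(1 <= j < n.+1) ('C(n, j))%:R * phi j y * gam (n - j)%N) k x :
  lambdaR Gam R k x =
  \sum_(m < k.+1) ('C(k, m)%:R * gam (k - m)%N) *: Glambda Gam R phi m x y.
Proof.
under [RHS]eq_bigr do rewrite Glambda_conv.
rewrite (@conv_assoc _ _ gam (fun b => phi b y) (fun j => lambdaR Gam R j x)) /=.
rewrite big_ord_recr /= subnn big1 ?add0r.
  by rewrite big_ord1 bin0 binn mul1r subn0 hgam0 mul1r mulfV // scale1r.
move=> j _.
rewrite (@rec_zero _ (fun b => phi b y) gam hp hgamS) ?mulr0 ?scale0r //.
by rewrite subn_gt0.
Qed.

Lemma Mrows_E (K : realType) (gam : nat -> complex K) n (i : 'I_n) (k : 'I_n.+1) :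
  Mrows gam n i k = 'C(k, i)%:R * gam (k - i)%N.
Proof.
rewrite mxE; case: leqP => // h.
by rewrite bin_small // mul0r.
Qed.

Lemma det_last (K : realType) (gam : nat -> complex K) n :
  \det (col' ord_max (Mrows gam n)) = gam 0%N ^+ n.
Proof.
have hl : forall i : 'I_n, (lift ord_max i : nat) = i.
  by move=> i; rewrite /= /bump leqNgt ltn_ord.
rewrite -det_tr det_trig.
  rewrite (eq_bigr (fun _ => gam 0%N)).
    by rewrite prodr_const card_ord.
  by move=> i _; rewrite !mxE hl leqnn binn subnn mul1r.
apply/is_trig_mxP => i j hij; rewrite !mxE hl.
by rewrite leqNgt hij.
Qed.

Lemma coef_lt (K : realType) (gam : nat -> complex K) n (m : 'I_n) :
  \sum_(k < n.+1) (-1) ^+ k * \det (col' k (Mrows gam n)) * ('C(k, m)%:R * gam (k - m)%N) = 0.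
Proof.
pose B : 'M[complex K]_(n.+1) := \matrix_(i < n.+1, k < n.+1)
   (if unlift ord0 i is Some i' then Mrows gam n i' k else Mrows gam n m k).
have hB : \det B = 0.
  apply: (@determinant_alternate _ _ B ord0 (lift ord0 m)); first exact: neq_lift.
  by move=> k; rewrite !mxE unlift_none liftK [RHS]mxE.
rewrite -[RHS]hB (expand_det_row B ord0); apply: eq_bigr => k _; rewrite /cofactor.
have -> : row' ord0 (col' k B) = col' k (Mrows gam n).
  by apply/matrixP => i j; rewrite !mxE (liftK (ord0 : 'I_n.+1) i) [LHS]mxE.
rewrite mxE unlift_none Mrows_E add0n; ring.
Qed.

Lemma coef_n (K : realType) (gam : nat -> complex K) n :
  \sum_(k < n.+1) (-1) ^+ k * \det (col' k (Mrows gam n)) * ('C(k, n)%:R * gam (k - n)%N)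
  = (-1) ^+ n * gam 0%N ^+ n.+1.
Proof.
rewrite big_ord_recr /= big1 ?add0r.
  by rewrite det_last binn subnn mul1r exprS; ring.
by move=> i _; rewrite bin_small // mul0r mulr0.
Qed.

Theorem theorem3p2 (K : realType) (N : nat) (hN : (0 < N)%N)
  (Gam : 'M[complex K]_N -> 'M[complex K]_N) (R : 'M[complex K]_N)
  (hR : positive_stable R)
  (Y : Type) (phi : nat -> Y -> complex K) (y : Y) (hphi0 : phi 0%N y != 0)
  (gam : nat -> complex K)
  (hgam0 : gam 0%N = (phi 0%N y)^-1)
  (hgamS : forall n : nat, (1 <= n)%N ->
     gam n = - (phi 0%N y)^-1 *
       \sum_(1 <= j < n.+1) ('C(n, j))%:R * phi j y * gam (n - j)%N) :
  (forall x : complex K,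
     Glambda Gam R phi 0 x y = (gam 0%N)^-1 *: cj Gam R 0) /\
  (forall (n : nat) (x : complex K), (1 <= n)%N ->
     Glambda Gam R phi n x y =
       ((-1) ^+ n / gam 0%N ^+ n.+1) *: detMn Gam R gam n x).
Proof.
have g0 : gam 0%N != 0 by rewrite hgam0 invr_eq0.
split.
  move=> x; rewrite Glambda_conv big_ord1 /lambdaR big_ord1 /= hgam0 invrK.
  by rewrite bin0 !mul1r expr0 scale1r.
move=> n x _.
have -> : detMn Gam R gam n x = \sum_(m < n.+1)
   (\sum_(k < n.+1) (-1) ^+ k * \det (col' k (Mrows gam n)) * ('C(k, m)%:R * gam (k - m)%N))
     *: Glambda Gam R phi m x y.
  rewrite /detMn.
  transitivity (\sum_(k < n.+1) \sum_(m < n.+1)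
     ((-1) ^+ k * \det (col' k (Mrows gam n)) * ('C(k, m)%:R * gam (k - m)%N))
     *: Glambda Gam R phi m x y); last first.
    by rewrite exchange_big; apply: eq_bigr => m _; rewrite scaler_suml.
  apply: eq_bigr => k _.
  rewrite (@lambda_inv K N Gam R Y phi y gam hphi0 hgam0 hgamS k x) scaler_sumr.
  rewrite (@sum_widen0 _ k.+1 n.+1 (fun m => ((-1) ^+ k * \det (col' k (Mrows gam n))) *:
       (('C(k, m)%:R * gam (k - m)%N) *: Glambda Gam R phi m x y))) //.
    by apply: eq_bigr => m _; rewrite scalerA.
  by move=> i hi; rewrite bin_small // mul0r scale0r scaler0.
rewrite big_ord_recr /= big1 ?add0r; last first.
  by move=> m _; rewrite coef_lt scale0r.
rewrite coef_n scalerA.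
have hg : gam 0%N ^+ n.+1 != 0 by rewrite expf_neq0.
by rewrite mulrACA -exprMn mulrNN mulr1 expr1n mul1r mulVf // scale1r.
Qed.
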